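(* For every component $H$ of $G[\overline{C}]$, we have $|N_H(x_1)|=|N_H(x_2)|=1$.
   Context: All graphs are simple. $\mathcal{G}^*$ denotes the class of graphs in which any two distinct odd cycles share at most one edge. Standing setting: $G\in\mathcal{G}^*$ is $2$-connected, and $C$ is a longest odd cycle of $G$ with $|C|\ge 5$. We also write $C$ for its vertex set. Let $\overline{C}=V(G)\setminus C$, assumed nonempty. For $v\in\overline{C}$ and $w\in C$, $v$ touches $w$ if there is a $v,w$-path meeting $C$ only at $w$. $T(v)=\{w\in C: v \text{ touches } w\}$. In this setting, $T(v)$ is the same set for all $v\in\overline{C}$; this set is $\{x_1,x_2\}$ for two adjacent vertices $x_1,x_2$ of $C$. For $u\in V(G)$, write $N_H(u)=N(u)\cap V(H)$. *)

(* Defs.v *)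
(* Simple graphs: symmetric irreflexive relation e on a finType T. *)
From mathcomp Require Import all_boot.
Set Implicit Arguments. Unset Strict Implicit. Unset Printing Implicit Defensive.

Section Graphs.
Variable T : finType.
Variable e : rel T.

Definition is_cycle (c : seq T) : bool :=
  [&& 3 <= size c, uniq c & cycle e c].

Definition odd_cycle (c : seq T) : bool := is_cycle c && odd (size c).

Definition cycle_edges (c : seq T) : {set {set T}} :=
  [set [set x; next c x] | x in c].

(* Class G^*: two distinct odd cycles share at most one edge.
   Cycles (as subgraphs) are distinct iff their edge sets differ. *)
Definition in_Gstar : Prop :=
  forall c1 c2, odd_cycle c1 -> odd_cycle c2 ->
    cycle_edges c1 != cycle_edges c2 ->
    #|cycle_edges c1 :&: cycle_edges c2| <= 1.

Definition induced (A : {set T}) : rel T :=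
  fun x y => [&& e x y, x \in A & y \in A].

Definition connected_in (A : {set T}) : Prop :=
  forall x y, x \in A -> y \in A -> connect (induced A) x y.

Definition two_connected : Prop :=
  3 <= #|T| /\ connected_in setT /\ forall v, connected_in (setT :\ v).

Definition longest_odd_cycle (c : seq T) : Prop :=
  odd_cycle c /\ forall c', odd_cycle c' -> size c' <= size c.

Definition touches (C : {set T}) (v w : T) : Prop :=
  exists p : seq T, [/\ path e v p, last v p = w, uniq (v :: p)
                      & all (fun x => x \notin C) (belast v p)].

Definition component_outside (C H : {set T}) : Prop :=
  exists2 x, x \notin C &
    H = [set y | (y \notin C) && connect (induced (~: C)) x y].

Definition nbhd_in (H : {set T}) (u : T) : {set T} := [set y in H | e u y].

End Graphs.

(* Main.v *)
Require Import Defs.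
From mathcomp Require Import all_boot zify.
Set Implicit Arguments. Unset Strict Implicit. Unset Printing Implicit Defensive.

Section Aux.
Variable T : finType.
Implicit Types (s p q : seq T) (x y z : T).

Lemma next_mid p1 p2 y z : uniq (p1 ++ y :: z :: p2) ->
  next (p1 ++ y :: z :: p2) y = z.
Proof.
move=> U; rewrite next_nth mem_cat inE eqxx orbT.
have yp1 : y \notin p1.
  by move: U; rewrite cat_uniq => /and3P[_ /hasPn H _]; apply: H; rewrite inE eqxx.
case: p1 U yp1 => [|h p1] U yp1 /=; first by rewrite eqxx.
rewrite inE negb_or in yp1; case/andP: yp1 => yh yp1.
rewrite eq_sym (negbTE yh) index_cat (negbTE yp1) /= eqxx.
idtac.
by rewrite addn0 nth_cat ltnNge leqnSn /= subSn // subnn.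
Qed.

Lemma next_last h s y : uniq (h :: rcons s y) -> next (h :: rcons s y) y = h.
Proof.
move=> U; rewrite next_nth inE mem_rcons inE eqxx orbT /=.
case/andP: U; rewrite mem_rcons inE negb_or => /andP[hy _] U.
rewrite (negbTE hy) nth_default // size_rcons.
have : uniq (s ++ [:: y]) by rewrite cats1.
rewrite cat_uniq /= => /and3P[_ /norP[ys _] _].
by rewrite -cats1 index_cat (negbTE ys) /= eqxx addn0.
Qed.

Lemma edges_sub c1 c2 : cycle_edges c1 = cycle_edges c2 ->
  forall y, y \in c1 -> y \in c2.
Proof.
move=> E y yc.
have : [set y; next c1 y] \in cycle_edges c2 by rewrite -E; apply: imset_f.
case/imsetP => y' y'c EE.
have : y \in [set y'; next c2 y'] by rewrite -EE set21.
by case/set2P => ->; rewrite ?mem_next.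
Qed.

Lemma uniq_path (r : rel T) x y : connect r x y ->
  exists p, [/\ path r x p, uniq (x :: p) & last x p = y].
Proof.
case/connectP => p P ->; case: (shortenP P) => p' P' U' _.
by exists p'.
Qed.

Lemma first_hit (r : rel T) (S : pred T) x p : path r x p -> uniq (x :: p) ->
  S (last x p) -> exists p', [/\ path r x p', uniq (x :: p'), {subset p' <= p},
     S (last x p') & all (predC S) (belast x p')].
Proof.
elim: p x => [|y p IH] x /=.
  by move=> _ _ Sx; exists [::].
case/andP => rxy P /andP[xn U] Sl.
case Sx: (S x); first by exists [::].
have [p' [P' U' sub S' A']] := IH y P U Sl.
exists (y :: p'); split => //=.
- by rewrite rxy.
- apply/andP; split => //; apply: contra xn => H; move: H; rewrite inE.
  by case/orP => [/eqP->|/sub]; rewrite inE ?eqxx // orbC => ->.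
- by move=> v; rewrite !inE => /orP[->//|/sub ->]; rewrite orbT.
- by rewrite Sx.
Qed.

Lemma split_mem x s : x \in s -> exists p1 p2, s = p1 ++ x :: p2.
Proof. by case/splitPr => p1 p2; exists p1, p2. Qed.

Lemma stays (S : {set T}) (r : rel T) :
  (forall v y, v \in S -> r v y -> y \in S) ->
  forall p v, v \in S -> path r v p -> last v p \in S.
Proof.
move=> H; elim => [|y p IH] v //= vS /andP[rvy P].
exact: IH (H _ _ vS rvy) P.
Qed.

Lemma rev_part (e : rel T) : symmetric e -> forall w R,
  path e w R -> path e (last w R) (rev (belast w R)) /\
  last (last w R) (rev (belast w R)) = w.
Proof.
move=> sym w R P; split.
  rewrite rev_path; move: P; apply: sub_path => a b; by rewrite sym.
case: R {P} => [|y R] //=.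
by rewrite rev_cons last_rcons.
Qed.

Lemma uniq_glue X Z : uniq X -> uniq Z -> (forall y, y \in Z -> y \notin X) ->
  uniq (X ++ Z).
Proof.
move=> UX UZ D; rewrite cat_uniq UX UZ andbT.
by apply/hasPn => y /D.
Qed.

End Aux.
Section Main.
Variables (T : finType) (e : rel T).
Hypotheses (sym : symmetric e) (irr : irreflexive e).

Lemma parity (c s : seq T) a b : longest_odd_cycle e c -> uniq (a :: b :: s) ->
  cycle e (a :: b :: s) -> size (a :: b :: s) = size c -> {subset a :: b :: s <= c} ->
  forall q, q != [::] -> uniq q -> all (fun y => y \notin c) q ->
  path e a (rcons q b) -> odd (size q).
Proof.
move=> [/andP[_ oc] lng] U Cy Sz Sub q qn Uq Aq P.
apply/negPn/negP => ev.
set L := b :: (rcons s a ++ q).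
have sL : size L = size c + size q by rewrite -Sz /L /= size_cat size_rcons.
have : odd_cycle e L.
  rewrite /odd_cycle /is_cycle sL oddD oc (negbTE ev) andbT.
  apply/and3P; split.
  - move: oc; rewrite -Sz /=; case: (s) => //= y s' _; lia.
  - have -> : L = (b :: rcons s a) ++ q by [].
    apply: uniq_glue => //.
      by rewrite -(rot_uniq 1) rot1_cons in U.
    move=> y yq; apply: contra (allP Aq y yq) => yL; apply: Sub; move: yL.
    rewrite !inE mem_rcons !inE.
    by case/orP => [->|/orP[]->]; rewrite ?orbT.
  - rewrite /= in Cy; case/andP: Cy => _ Cy.
    by rewrite /L /= rcons_cat cat_path last_rcons P Cy.
move/lng; rewrite sL.
have : 0 < size q by case: (q) qn.
lia.
Qed.

Lemma mem_inner (c X : seq T) a b y : a \in c -> b \in c -> y \notin c ->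
  (y \in a :: rcons X b) = (y \in X).
Proof.
move=> ac bc yc; rewrite inE mem_rcons inE.
have -> : (y == a) = false by apply/eqP => E; move: yc; rewrite E ac.
by have -> : (y == b) = false by apply/eqP => E; move: yc; rewrite E bc.
Qed.

Lemma short_cycle (c q : seq T) a b : a \in c -> b \in c -> a != b -> e a b ->
  uniq q -> all (fun y => y \notin c) q -> path e a (rcons q b) -> odd (size q) ->
  [/\ odd_cycle e (a :: rcons q b), [set a; b] \in cycle_edges (a :: rcons q b)
    & [set last a q; b] \in cycle_edges (a :: rcons q b)].
Proof.
move=> ac bc ab eab Uq Aq P oq.
have U : uniq (a :: rcons q b).
  have aq : a \notin q by apply/negP => aq; move: (allP Aq a aq) => /=; rewrite ac.
  have bq : b \notin q by apply/negP => bq; move: (allP Aq b bq) => /=; rewrite bc.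
  by rewrite /= rcons_uniq Uq mem_rcons inE negb_or ab aq bq.
split.
- rewrite /odd_cycle /is_cycle U /= size_rcons /= oq rcons_path P last_rcons sym eab.
  by move: oq; case: (q).
- have -> : [set a; b] = [set b; next (a :: rcons q b) b] by rewrite next_last // setUC.
  by apply: imset_f; rewrite inE mem_rcons inE eqxx orbT.
- have E : a :: rcons q b = belast a q ++ [:: last a q; b].
    by rewrite -rcons_cons lastI -!cats1 -catA.
  have -> : [set last a q; b] = [set last a q; next (a :: rcons q b) (last a q)].
    by rewrite E next_mid // -E.
  apply: imset_f; rewrite E mem_cat inE eqxx orbT //.
Qed.

End Main.
Section Upper.
Variables (T : finType) (e : rel T).
Hypotheses (sym : symmetric e) (irr : irreflexive e) (Gs : in_Gstar e).

Lemma path_inH (H : {set T}) x p : path (induced e H) x p -> {subset p <= H}.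
Proof.
elim: p x => [|y p IH] x //= /andP[/and3P[_ _ yH] P] v.
by rewrite inE => /orP[/eqP->//|]; exact: (IH _ P v).
Qed.

Lemma path_e (H : {set T}) x p : path (induced e H) x p -> path e x p.
Proof. by apply: sub_path => u v /and3P[]. Qed.

Lemma upper (c : seq T) (H : {set T}) a b :
 a \in c -> b \in c -> a != b -> e a b ->
 (forall q, q != [::] -> uniq q -> all (fun y => y \notin c) q ->
    path e a (rcons q b) -> odd (size q)) ->
 (forall y, y \in H -> y \notin c) ->
 (forall y z, y \in H -> z \in H -> connect (induced e H) y z) ->
 forall u u' w, u \in H -> u' \in H -> w \in H -> e a u -> e a u' -> e b w ->
 u = u'.
Proof.
move=> ac bc ab eab hodd Hc Hcon u u' w uH u'H wH eau eau' ebw.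
apply/eqP/negPn/negP => uu'.
have [t [Pt Ut Lt]] := uniq_path (Hcon _ _ uH u'H).
have [R0 [PR0 UR0 LR0]] := uniq_path (Hcon _ _ wH uH).
have hL : last w R0 \in u :: t by rewrite LR0 mem_head.
have [R [PR UR subR SR AR]] :=
  @first_hit _ _ (fun x => x \in u :: t) _ _ PR0 UR0 hL.
move: SR AR; set z := last w R => SR AR.
have [p1 [p2 Ep]] := split_mem SR.
have tH : {subset u :: t <= H}.
  move=> y; rewrite inE => /orP[/eqP->//|yt]; exact: (path_inH Pt yt).
have RH : {subset w :: R <= H}.
  by move=> y; rewrite inE => /orP[/eqP->//|/subR yR0]; exact: (path_inH PR0 yR0).
set rr := rev (belast w R).
have [Prr Lrr] := rev_part sym (path_e PR).
rewrite -/z -/rr in Prr Lrr.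
have rrD : forall y, y \in rr -> y \notin u :: t.
  by move=> y; rewrite mem_rev => /(allP AR).
have rrH : {subset rr <= H}.
  by move=> y; rewrite mem_rev => /mem_belast /RH.
have Urr : uniq rr.
  rewrite rev_uniq; move: UR; rewrite lastI rcons_uniq; by case/andP.
have Upz : uniq (p1 ++ z :: p2) by rewrite -Ep.
have Pe : path e a (p1 ++ z :: p2) by rewrite -Ep /= eau (path_e Pt).
move: Pe; rewrite cat_path /= => /and3P[Pp1 ez Pp2].
have Lu' : u' = last z p2.
  by rewrite -Lt -(last_cons u u t) Ep last_cat.
have sub1 : {subset rcons p1 z <= u :: t}.
  by move=> y; rewrite Ep -cat_rcons mem_cat => ->.
have sub2 : {subset rev (z :: p2) <= u :: t}.
  by move=> y; rewrite mem_rev Ep mem_cat => ->; rewrite orbT.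
set A := rcons p1 z ++ rr.
set B := rev (z :: p2) ++ rr.
have HA : {subset A <= H}.
  by move=> y; rewrite mem_cat => /orP[/sub1/tH|/rrH].
have HB : {subset B <= H}.
  by move=> y; rewrite mem_cat => /orP[/sub2/tH|/rrH].
have allA : all (fun y => y \notin c) A by apply/allP => y /HA /Hc.
have allB : all (fun y => y \notin c) B by apply/allP => y /HB /Hc.
have UA : uniq A.
  apply: uniq_glue => //.
    by move: Upz; rewrite -cat_rcons cat_uniq => /andP[].
  by move=> y /rrD; apply: contra => /sub1.
have UB : uniq B.
  apply: uniq_glue => //.
    by rewrite rev_uniq; move: Upz; rewrite cat_uniq => /and3P[].
  by move=> y /rrD; apply: contra => /sub2.
have LA : last a A = w by rewrite /A last_cat last_rcons.
have LB : last a B = w by rewrite /B last_cat rev_cons last_rcons.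
have PA : path e a (rcons A b).
  rewrite /A rcons_cat cat_path last_rcons rcons_path Pp1 ez /= rcons_path.
  by apply/andP; split; [exact: Prr | rewrite [last _ _]Lrr sym].
have PB : path e a (rcons B b).
  rewrite /B rcons_cat cat_path.
  have -> : last a (rev (z :: p2)) = z by rewrite rev_cons last_rcons.
  rewrite rcons_path.
  have -> : path e z rr && e (last z rr) b by apply/andP; split; [exact: Prr | rewrite [last _ _]Lrr sym].
  rewrite !andbT.
  rewrite lastI rev_rcons /= -Lu' eau' /=.
  by have [+ _] := rev_part sym Pp2; rewrite -Lu'.
have nA : A != [::] by rewrite /A; case: (p1).
have nB : B != [::] by rewrite /B rev_cons; case: (rev p2).
have [oA eA1 eA2] := short_cycle sym ac bc ab eab UA allA PA (hodd _ nA UA allA PA).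
have [oB eB1 eB2] := short_cycle sym ac bc ab eab UB allB PB (hodd _ nB UB allB PB).
rewrite LA in eA2; rewrite LB in eB2.
have wc : w \notin c := Hc _ wH.
have neq : cycle_edges (a :: rcons A b) != cycle_edges (a :: rcons B b).
  apply/eqP => EE.
  have s12 := edges_sub EE; have s21 := edges_sub (esym EE).
  have u'c : u' \notin c := Hc _ u'H.
  have uc : u \notin c := Hc _ uH.
  case Ep1: p1 => [|h p1'].
  - rewrite Ep1 /= in Ep Upz.
    case Ep2: p2 => [|y p2'].
      move: Ep; rewrite Ep2 => -[_ Et].
      by move: Lt; rewrite Et /= => Eu; rewrite Eu eqxx in uu'.
    have u'in : u' \in p2 by rewrite Lu' Ep2 /= mem_last.
    have := s21 u'.
    rewrite !(mem_inner _ ac bc u'c) /B /A !mem_cat mem_rev inE u'in orbT.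
    move=> /(_ isT); rewrite Ep1 /= inE.
    case/orP => [/eqP Ez|/rrD]; last by rewrite Ep mem_behead.
    by move: Upz; rewrite /= -Ez u'in.
  - rewrite Ep1 /= in Ep Upz; case: Ep => Eh Et; subst h.
    have := s12 u.
    rewrite !(mem_inner _ ac bc uc) /B /A !mem_cat Ep1 rcons_cons inE eqxx.
    move=> /(_ isT); case/orP; last by move/rrD; rewrite mem_head.
    rewrite mem_rev; move: Upz => /= /andP[+ _].
    by rewrite mem_cat negb_or => /andP[_ /negbTE->].
have := Gs oA oB neq.
move/card_le1_eqP => /(_ [set a; b] [set w; b]).
rewrite !inE eA1 eB1 eA2 eB2 => /(_ isT isT) Eab.
have : w \in [set a; b] by rewrite -Eab set21.
by case/set2P => Ew; move: wc; rewrite Ew ?ac ?bc.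
Qed.

End Upper.
Section Final.
Variables (T : finType) (e : rel T).
Hypotheses (sym : symmetric e) (irr : irreflexive e) (Gs : in_Gstar e).

Lemma core (c : seq T) (x1 x2 : T) :
  two_connected e ->
  longest_odd_cycle e c -> 5 <= size c ->
  x1 \in c -> x2 \in c -> x2 = next c x1 ->
  (forall v, v \notin c ->
     forall w, (w \in c /\ touches e [set y in c] v w) <-> (w = x1 \/ w = x2)) ->
  forall H : {set T}, component_outside e [set y in c] H ->
    #|nbhd_in e H x1| = 1 /\ #|nbhd_in e H x2| = 1.
Proof.
move=> [_ [_ conn]] lng s5 x1c x2c Enext Tch H [x0 x0C EH].
have Uc : uniq c by case: lng => /andP[/and3P[_ U _] _].
have Cc : cycle e c by case: lng => /andP[/and3P[_ _ C] _].
have [s Es] : exists s, rot (index x1 c) c = x1 :: x2 :: s.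
  have Er := rot_index x1c; move: Er.
  case: (drop _ _ ++ take _ _) => [|y s] Er.
    by have := size_rot (index x1 c) c; rewrite Er => E; rewrite -E in s5.
  exists s; rewrite Er; congr (_ :: _ :: _).
  by rewrite Enext -(next_rot (index x1 c) Uc) Er /= eqxx.
have Uc' : uniq (x1 :: x2 :: s) by rewrite -Es rot_uniq.
have Cy : cycle e (x1 :: x2 :: s) by rewrite -Es rot_cycle.
have Sz : size (x1 :: x2 :: s) = size c by rewrite -Es size_rot.
have Sub : {subset x1 :: x2 :: s <= c} by move=> y; rewrite -Es mem_rot.
have hodd1 := parity lng Uc' Cy Sz Sub.
have hodd2 : forall q, q != [::] -> uniq q -> all (fun y => y \notin c) q ->
    path e x2 (rcons q x1) -> odd (size q).
  move=> q qn Uq Aq P.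
  have P' : path (fun a b => e b a) x2 (rcons q x1) by apply: sub_path P => a b; rewrite sym.
  move: P'; rewrite -rev_path last_rcons belast_rcons rev_cons => P'.
  rewrite -size_rev; apply: hodd1 P' => //.
  - by move: qn; case: (q) => //= y q'; rewrite rev_cons; case: (rev q').
  - by rewrite rev_uniq.
  - by rewrite all_rev.
have e12 : e x1 x2 by move: Cy => /= /andP[].
have n12 : x1 != x2 by move: Uc' => /= /andP[]; rewrite inE negb_or => /andP[].
have Hc : forall y, y \in H -> y \notin c by move=> y; rewrite EH !inE => /andP[].
have F2 : forall y z, y \in H -> z \notin c -> e y z -> z \in H.
  move=> y z; rewrite EH !inE => /andP[yc cy] zc eyz; rewrite zc /=.
  apply: connect_trans cy (connect1 _); by rewrite /induced !inE yc zc eyz.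
have F3 : forall y z, y \in H -> z \in c -> e y z -> z = x1 \/ z = x2.
  move=> y z yH zc eyz; apply: (Tch y (Hc y yH) z).1; split => //.
  exists [:: z]; split => //=.
  - by rewrite eyz.
  - rewrite inE andbT; apply/eqP => E; move: (Hc y yH); by rewrite E zc.
  - by rewrite inE (negbTE (Hc y yH)).
have x0H : x0 \in H by rewrite EH inE x0C connect0.
have Hsym : symmetric (induced e H).
  move=> a b; rewrite /induced sym; congr (_ && _); by rewrite andbC.
have pconv : forall p v, v \in H -> path (induced e (~: [set y in c])) v p ->
    path (induced e H) v p.
  elim => [|y p IH] v //= vH /andP[/and3P[evy _ yC] P].
  have yH : y \in H by apply: F2 vH _ evy; move: yC; rewrite !inE.
  by rewrite /induced evy vH yH (IH _ yH P).
have Hcon0 : forall y, y \in H -> connect (induced e H) x0 y.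
  move=> y; rewrite {1}EH inE => /andP[_ /connectP [p P ->]].
  by apply/connectP; exists p => //; exact: (pconv p x0 x0H P).
have Hcon : forall y z, y \in H -> z \in H -> connect (induced e H) y z.
  move=> y z yH zH; apply: connect_trans (Hcon0 _ zH).
  by rewrite (sym_connect_sym Hsym); apply: Hcon0.
have lower : forall a b, a \in c -> b \in c -> a != b ->
    connected_in e (setT :\ a) ->
    (forall y z, y \in H -> z \in c -> e y z -> z = a \/ z = b) ->
    exists2 w, w \in H & e b w.
  move=> a b ac bc ab cona F3'.
  case: (boolP [exists w, (w \in H) && e b w]).
    by case/existsP => w /andP[wH ebw]; exists w.
  rewrite negb_exists => /forallP hno.
  have x0a : x0 \in setT :\ a.
    by rewrite !inE andbT; apply/eqP => E; move: x0C; rewrite E inE ac.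
  have ba : b \in setT :\ a by rewrite !inE andbT eq_sym.
  have /connectP [p P Eb] := cona _ _ x0a ba.
  have step : forall v y, v \in H -> induced e (setT :\ a) v y -> y \in H.
    move=> v y vH /and3P[evy _ ya].
    case: (boolP (y \in c)) => yc; last exact: F2 vH yc evy.
    case: (F3' v y vH yc evy) => E.
      by move: ya; rewrite E !inE eqxx.
    by move: (hno v); rewrite vH -E sym evy.
  have := stays step x0H P; rewrite -Eb => /Hc; by rewrite bc.
have fin : forall a b, a \in c -> b \in c -> a != b -> e a b ->
    (forall q, q != [::] -> uniq q -> all (fun y => y \notin c) q ->
       path e a (rcons q b) -> odd (size q)) ->
    (forall y z, y \in H -> z \in c -> e y z -> z = a \/ z = b) ->
    #|nbhd_in e H a| = 1.
  move=> a b ac bc ab eab hodd F3'.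
  have [w wH ebw] := lower a b ac bc ab (conn a) F3'.
  have F3'' : forall y z, y \in H -> z \in c -> e y z -> z = b \/ z = a.
    by move=> y z yH zc eyz; case: (F3' y z yH zc eyz); [right|left].
  have ba : b != a by rewrite eq_sym.
  have [u uH eau] := lower b a bc ac ba (conn b) F3''.
  have le1 : #|nbhd_in e H a| <= 1.
    apply/card_le1_eqP => y y'; rewrite !inE => /andP[yH eay] /andP[y'H eay'].
    exact: (upper sym Gs ac bc ab eab hodd Hc Hcon y'H yH wH eay' eay ebw).
  have gt0 : 0 < #|nbhd_in e H a| by apply/card_gt0P; exists u; rewrite !inE uH eau.
  by apply/eqP; rewrite eqn_leq le1 gt0.
split.
  exact: fin x1c x2c n12 e12 hodd1 F3.
apply: (fin x2 x1) => //.
- by rewrite eq_sym.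
- by rewrite sym.
- by move=> y z yH zc eyz; case: (F3 y z yH zc eyz); [right|left].
Qed.

End Final.


Unset Implicit Arguments.
Theorem mainTheorem9 (T : finType) (e : rel T) (c : seq T) (x1 x2 : T) :
  symmetric e -> irreflexive e ->
  in_Gstar e -> two_connected e ->
  longest_odd_cycle e c -> 5 <= size c ->
  (exists v, v \notin c) ->
  x1 \in c -> x2 \in c -> (x2 = next c x1 \/ x1 = next c x2) ->
  (forall v, v \notin c ->
     forall w, (w \in c /\ touches e [set y in c] v w) <-> (w = x1 \/ w = x2)) ->
  forall H : {set T}, component_outside e [set y in c] H ->
    #|nbhd_in e H x1| = 1 /\ #|nbhd_in e H x2| = 1.
Proof.
move=> sym irr Gs tc lng s5 _ x1c x2c [En|En] Tch H cH.
  by move: (core sym Gs tc lng s5 x1c x2c En) => /(_ Tch H cH).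
have Tch' : forall v, v \notin c ->
     forall w, (w \in c /\ touches e [set y in c] v w) <-> (w = x2 \/ w = x1).
  by move=> v vc w; rewrite (Tch v vc w); split; case; [right|left|right|left].
by have [] := core sym Gs tc lng s5 x2c x1c En Tch' cH.
Qed.
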